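(* Every hierarchical probabilistic automaton is leaktight.
   Context: Fix a finite alphabet $A$. A probabilistic automaton is $\mathcal{A}=(Q,q_0,\Delta,F)$ with $Q$ finite, $\Delta:Q\times A\to\mathcal{D}(Q)$. It is hierarchical if there exists a map $\mathrm{rank}:Q\to\mathbb{N}$ such that for all $a\in A$ and states $s,t$ with $\Delta(s,a)(t)>0$ we have $\mathrm{rank}(s)\le\mathrm{rank}(t)$, and moreover if $\Delta(s,a)(t)>0$, $\Delta(s,a)(t')>0$ and $\mathrm{rank}(s)=\mathrm{rank}(t)=\mathrm{rank}(t')$, then $t=t'$. For $a\in A$ let $M_a(s,t)=\Delta(s,a)(t)$, for $u=a_0\cdots a_{n-1}$ let $M_u=M_{a_0}\cdots M_{a_{n-1}}$ (identity for the empty word), and $\mathbb{P}_{\mathcal{A}}(s\xrightarrow{u}t)=M_u(s,t)$. A nonnegative $Q\times Q$ matrix $M$ is idempotent if $M(s,t)>0\iff M^2(s,t)>0$ for all $s,t$; a word $u$ is idempotent if $M_u$ is. A leak is a sequence $(u_n)$ of idempotent words such that $M_{u_n}$ converges to an idempotent matrix $M$ and there exist states $r,q$, both recurrent in the Markov chain with transition matrix $M$, with $\lim_n\mathbb{P}_{\mathcal{A}}(r\xrightarrow{u_n}q)=0$ and $\mathbb{P}_{\mathcal{A}}(r\xrightarrow{u_n}q)>0$ for all $n$. $\mathcal{A}$ is leaktight if it has no leak. *)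

(* Defs.v *)
From HB Require Import structures.
From mathcomp Require Import all_boot all_order all_algebra.
From mathcomp Require Import all_classical all_reals topology normedtype sequences.
Set Implicit Arguments. Unset Strict Implicit. Unset Printing Implicit Defensive.
Import Order.TTheory GRing.Theory Num.Theory.
Import numFieldNormedType.Exports.
Local Open Scope classical_set_scope.
Local Open Scope ring_scope.

Record pautomaton (R : realType) (A : finType) (n : nat) := PAutomaton {
  pa_init : 'I_n;
  pa_final : {set 'I_n};
  pa_delta : A -> 'M[R]_n;
  pa_delta_ge0 : forall a s t, 0 <= pa_delta a s t;
  pa_delta_sum1 : forall a s, \sum_(t < n) pa_delta a s t = 1
}.

Definition word_mx (R : realType) (A : finType) (n : nat)
  (P : pautomaton R A n) (u : seq A) : 'M[R]_n :=
  foldr (fun a M => pa_delta P a *m M) 1%:M u.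

Definition hierarchical (R : realType) (A : finType) (n : nat)
  (P : pautomaton R A n) : Prop :=
  exists rank : 'I_n -> nat,
    (forall a s t, 0 < pa_delta P a s t -> (rank s <= rank t)%N) /\
    (forall a s t t', 0 < pa_delta P a s t -> 0 < pa_delta P a s t' ->
       rank s = rank t -> rank s = rank t' -> t = t').

Definition idempotent_mx (R : realType) (n : nat) (M : 'M[R]_n) : Prop :=
  forall s t, (0 < M s t) <-> (0 < (M *m M) s t).

Definition mx_reach (R : realType) (n : nat) (M : 'M[R]_n) : rel 'I_n :=
  connect [rel s t | 0 < M s t].

Definition recurrent (R : realType) (n : nat) (M : 'M[R]_n) (r : 'I_n) : Prop :=
  forall t, mx_reach M r t -> mx_reach M t r.

Definition is_leak (R : realType) (A : finType) (n : nat)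
  (P : pautomaton R A n) (u : nat -> seq A) : Prop :=
  (forall k, idempotent_mx (word_mx P (u k))) /\
  exists M : 'M[R]_n,
    (forall s t, (fun k => word_mx P (u k) s t) @ \oo --> M s t) /\
    idempotent_mx M /\
    exists r q : 'I_n,
      recurrent M r /\ recurrent M q /\
      (fun k => word_mx P (u k) r q) @ \oo --> (0 : R) /\
      (forall k, 0 < word_mx P (u k) r q).

Definition leaktight (R : realType) (A : finType) (n : nat)
  (P : pautomaton R A n) : Prop :=
  ~ exists u : nat -> seq A, is_leak P u.

(* Main.v *)
Require Import Defs.
From HB Require Import structures.
From mathcomp Require Import all_boot all_order all_algebra.
From mathcomp Require Import all_classical all_reals topology normedtype sequences.
From mathcomp Require Import lra.
Set Implicit Arguments. Unset Strict Implicit. Unset Printing Implicit Defensive.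
Import Order.TTheory GRing.Theory Num.Theory.
Import numFieldNormedType.Exports.
Local Open Scope classical_set_scope.
Local Open Scope ring_scope.

Lemma sum_pos_ex (R : realType) (I : finType) (Q : pred I) (F : I -> R) :
  (forall i, 0 <= F i) -> 0 < \sum_(i | Q i) F i -> exists i, Q i && (0 < F i).
Proof.
move=> F0; case: (boolP [exists i, Q i && (0 < F i)]) => [/existsP//|/existsPn H].
rewrite big1 ?ltxx // => i Qi; apply/eqP; rewrite eq_le F0 andbT leNgt.
by have := H i; rewrite Qi.
Qed.

Lemma mul_pos_inv (R : realType) (a b : R) : 0 <= a -> 0 <= b -> 0 < a * b ->
  0 < a /\ 0 < b.
Proof.
move=> a0 b0; rewrite lt0r mulf_eq0 negb_or => /andP[/andP[na nb] _].
by rewrite !lt0r na nb a0 b0.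
Qed.

Lemma sum_single (R : realType) (I : finType) (Q : pred I) (F : I -> R) x0 :
  Q x0 -> (forall x, Q x -> x != x0 -> F x = 0) -> \sum_(i | Q i) F i = F x0.
Proof.
move=> Qx H; rewrite (bigD1 x0) //= big1 ?addr0 // => x /andP[Qx' nx].
exact: H.
Qed.

Section W.
Context (R : realType) (A : finType) (n : nat) (P : pautomaton R A n).

Local Notation W := (word_mx P).
Local Notation D := (pa_delta P).

Lemma word_ge0 u s t : 0 <= W u s t.
Proof.
elim: u s t => [|a u IH] s t /=; first by rewrite mxE ler0n.
rewrite mxE; apply: sumr_ge0 => x _; apply: mulr_ge0 => //; exact: pa_delta_ge0.
Qed.

Lemma word_sum1 u s : \sum_t W u s t = 1.
Proof.
elim: u s => [|a u IH] s /=.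
  rewrite (bigD1 s) //= mxE eqxx mulr1n big1 ?addr0 // => t nt.
  by rewrite mxE eq_sym (negbTE nt) mulr0n.
under eq_bigr do rewrite mxE.
rewrite exchange_big /=.
under eq_bigr do rewrite -mulr_sumr IH mulr1.
exact: pa_delta_sum1.
Qed.

Lemma word_cons_sum (c : pred 'I_n) a u s :
  \sum_(t | c t) W (a :: u) s t = \sum_x D a s x * \sum_(t | c t) W u x t.
Proof.
rewrite /=; under eq_bigr do rewrite mxE.
rewrite exchange_big /=; apply: eq_bigr => x _; by rewrite mulr_sumr.
Qed.

Lemma word_step a u s t : 0 < W (a :: u) s t -> exists x, 0 < D a s x /\ 0 < W u x t.
Proof.
rewrite /= mxE => /sum_pos_ex [i|x /andP[_ /mul_pos_inv]].
  apply: mulr_ge0; [exact: pa_delta_ge0|exact: word_ge0].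
move=> H; exists x; apply: H; [exact: pa_delta_ge0|exact: word_ge0].
Qed.

Lemma word_nil s t : 0 < W [::] s t -> s = t.
Proof. by rewrite /= mxE; case: eqP => // _; rewrite mulr0n ltxx. Qed.

Context (rk : 'I_n -> nat)
  (Hmon : forall a s t, 0 < D a s t -> (rk s <= rk t)%N)
  (Huniq : forall a s t t', 0 < D a s t -> 0 < D a s t' ->
       rk s = rk t -> rk s = rk t' -> t = t').

Lemma word_mon u s t : 0 < W u s t -> (rk s <= rk t)%N.
Proof.
elim: u s => [|a u IH] s; first by move/word_nil->.
move/word_step=> [x [h1 h2]]; exact: leq_trans (Hmon h1) (IH _ h2).
Qed.

Lemma word_uniq u s t t' : 0 < W u s t -> 0 < W u s t' ->
  rk s = rk t -> rk s = rk t' -> t = t'.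
Proof.
elim: u s => [|a u IH] s.
  by move=> /word_nil <- /word_nil <-.
move=> /word_step [x [h1 h2]] /word_step [x' [h1' h2']] e e'.
have ex : rk s = rk x.
  by apply/eqP; rewrite eqn_leq (Hmon h1) e (word_mon h2).
have ex' : rk s = rk x'.
  by apply/eqP; rewrite eqn_leq (Hmon h1') e' (word_mon h2').
have exx := Huniq h1 h1' ex ex'; subst x'.
apply: (IH x) => //; congruence.
Qed.

Definition Lw k0 u s := \sum_(t | (k0 < rk t)%N) W u s t.
Definition Sw k0 u s := \sum_(t | ~~ (k0 < rk t)%N) W u s t.

Lemma LS1 k0 u s : Lw k0 u s + Sw k0 u s = 1.
Proof. by rewrite /Lw /Sw -(word_sum1 u s) [in RHS](bigID (fun t => (k0 < rk t)%N)). Qed.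

Lemma Lw_ge0 k0 u s : 0 <= Lw k0 u s.
Proof. apply: sumr_ge0 => t _; exact: word_ge0. Qed.
Lemma Sw_ge0 k0 u s : 0 <= Sw k0 u s.
Proof. apply: sumr_ge0 => t _; exact: word_ge0. Qed.

Lemma Lw_high k0 u x : (k0 < rk x)%N -> Lw k0 u x = 1.
Proof.
move=> hx; have : Sw k0 u x = 0.
  rewrite /Sw big1 // => t ht; apply/eqP; rewrite eq_le word_ge0 andbT leNgt.
  apply/negP => /word_mon h; move: ht; rewrite -leqNgt => ht.
  by have := leq_trans hx (leq_trans h ht); rewrite ltnn.
by move: (LS1 k0 u x) => + S0; rewrite S0 addr0.
Qed.

Lemma key (d : R) (d0 : 0 <= d) (d1 : d <= 1)
  (hd : forall a s t, 0 < D a s t -> d <= D a s t) k0 u :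
  forall s, rk s = k0 -> Lw k0 u s = 0 \/ d * Sw k0 u s <= Lw k0 u s.
Proof.
elim: u => [|a u IH] s hs.
  left; rewrite /Lw big1 // => t ht; apply/eqP; rewrite eq_le word_ge0 andbT leNgt.
  by apply/negP => /word_nil est; move: ht; rewrite -est hs ltnn.
have eL : Lw k0 (a :: u) s = \sum_x D a s x * Lw k0 u x by apply: word_cons_sum.
have eS : Sw k0 (a :: u) s = \sum_x D a s x * Sw k0 u x by apply: word_cons_sum.
case: (boolP [exists x, (0 < D a s x) && (rk x != k0)]).
  move=> /existsP [x /andP [hx nx]]; right.
  have hk : (k0 < rk x)%N by rewrite ltn_neqAle eq_sym nx -hs (Hmon hx).
  have S1 : Sw k0 (a :: u) s <= 1.
    by rewrite -(LS1 k0 (a :: u) s) lerDr Lw_ge0.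
  apply: (le_trans (y := d)).
    by rewrite -[X in _ <= X]mulr1 ler_wpM2l.
  apply: (le_trans (hd _ _ _ hx)); rewrite eL (bigD1 x) //= Lw_high // mulr1 lerDl.
  apply: sumr_ge0 => y _; apply: mulr_ge0; [exact: pa_delta_ge0|exact: Lw_ge0].
move/existsPn => Hall.
have Hall' : forall x, 0 < D a s x -> rk x = k0.
  by move=> x hx; have := Hall x; rewrite hx /= negbK => /eqP.
case: (boolP [exists x, 0 < D a s x]); last first.
  move/existsPn => H0; left; rewrite eL big1 // => x _.
  suff -> : D a s x = 0 by rewrite mul0r.
  by apply/eqP; rewrite eq_le pa_delta_ge0 andbT leNgt H0.
move/existsP => [x0 hx0].
have Hz : forall x, x != x0 -> D a s x = 0.
  move=> x nx; apply/eqP; rewrite eq_le pa_delta_ge0 andbT leNgt; apply/negP => hx.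
  have e : x = x0 by apply: (Huniq hx hx0); rewrite hs Hall'.
  by rewrite e eqxx in nx.
rewrite eL eS (sum_single (x0 := x0)) // ?(sum_single (Q := predT) (x0 := x0)) //;
  try by move=> x _ nx; rewrite Hz // mul0r.
case: (IH x0 (Hall' _ hx0)) => [->|h]; first by left; rewrite mulr0.
right; rewrite mulrCA ler_wpM2l //; exact: pa_delta_ge0.
Qed.

End W.

Lemma reach_rank (R : realType) (n : nat) (M : 'M[R]_n) (rk : 'I_n -> nat) :
  (forall s t, 0 < M s t -> (rk s <= rk t)%N) ->
  forall x y, mx_reach M x y -> (rk x <= rk y)%N.
Proof.
move=> H x y /connectP [p]; elim: p x => [|z p IH] x /=; first by move=> _ ->.
move=> /andP [hxz hp] ey; exact: leq_trans (H _ _ hxz) (IH _ hp ey).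
Qed.

Theorem proposition5p5 (R : realType) (A : finType) (n : nat)
  (P : pautomaton R A n) :
  hierarchical P -> leaktight P.
Proof.
move=> [rk [Hmon Huniq]] [u [Hid [M [Hcv [HMid [r [q [Hr [Hq [H0 Hpos]]]]]]]]]].
pose d := \big[Num.min/1]_(i : A * 'I_n * 'I_n | 0 < pa_delta P i.1.1 i.1.2 i.2)
   pa_delta P i.1.1 i.1.2 i.2.
have d0 : 0 < d.
  rewrite /d; apply: (big_ind (fun x : R => 0 < x)) => //; first by move=> x y hx hy; rewrite lt_min hx hy.
have d1 : d <= 1 by exact: bigmin_le_id.
have hd : forall a s t, 0 < pa_delta P a s t -> d <= pa_delta P a s t.
  move=> a s t h; have := @bigmin_le_cond _ _ _ 1 (a, s, t) (fun i : A * 'I_n * 'I_n => 0 < pa_delta P i.1.1 i.1.2 i.2) (fun i => pa_delta P i.1.1 i.1.2 i.2) h. exact.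
have Mpos : forall s t, 0 < M s t -> (rk s <= rk t)%N.
  move=> s t h; have [k hk] := filter_ex (cvgr_gt _ (Hcv s t) _ h).
  move: hk; apply: word_mon. exact Hmon.
have Mge0 : forall s t, 0 <= M s t.
  move=> s t; rewrite leNgt; apply/negP => h.
  have [k hk] := filter_ex (cvgr_lt _ (Hcv s t) _ h).
  by have := word_ge0 P (u k) s t; rewrite leNgt hk.
have Mr0 : forall t, (rk r < rk t)%N -> M r t = 0.
  move=> t ht; apply/eqP; rewrite eq_le Mge0 andbT leNgt; apply/negP => h.
  have : mx_reach M r t by apply: connect1.
  move/Hr/(reach_rank Mpos); by rewrite leqNgt ht.
have HL : (fun k => Lw P rk (rk r) (u k) r) @ \oo --> (0 : R).
  have HL0 : \sum_(t | (rk r < rk t)%N) M r t = 0 by rewrite big1 // => t; exact: Mr0.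
  rewrite -HL0; apply: cvg_big; [exact: add_continuous | by move=> t _; exact: Hcv].
have h12 : (0:R) < 1/2 by rewrite divr_gt0 ?ltr01 ?ltr0n.
pose e := Num.min (1 / 2) (d / 2 : R).
have e0 : 0 < e by rewrite lt_min !divr_gt0 ?ltr01 ?ltr0n.
have [k [hk1 hk2]] := filter_ex (filterI (cvgr_lt _ HL _ e0) (cvgr_lt _ H0 (1/2) h12)).
move: hk1 hk2 => /= hk1 hk2.
have [hL1 hL2] : Lw P rk (rk r) (u k) r < 1/2 /\ Lw P rk (rk r) (u k) r < d/2.
  by move: hk1; rewrite lt_min => /andP[].
have LS := LS1 P rk (rk r) (u k) r.
have L0 : Lw P rk (rk r) (u k) r = 0.
  have := key Hmon Huniq (ltW d0) d1 hd (u k) (erefl (rk r)).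
  case=> // h; exfalso.
  have hS : Sw P rk (rk r) (u k) r = 1 - Lw P rk (rk r) (u k) r.
    by rewrite -LS addrC addKr.
  rewrite hS in h.
  set L := Lw P rk (rk r) (u k) r in h hL1 hL2 hS LS.
  nra.
have hq : ~~ (rk r < rk q)%N.
  apply/negP => hrq.
  have : word_mx P (u k) r q <= Lw P rk (rk r) (u k) r.
    rewrite /Lw (bigD1 q) //= lerDl; apply: sumr_ge0 => t _; exact: word_ge0.
  rewrite L0 => h1; have := lt_le_trans (Hpos k) h1; by rewrite ltxx.
have Sq : Sw P rk (rk r) (u k) r = word_mx P (u k) r q.
  rewrite /Sw (sum_single (x0 := q)) // => t ht ntq.
  apply/eqP; rewrite eq_le word_ge0 andbT leNgt; apply/negP => hpt.
  have e1 : rk r = rk t by apply/eqP; rewrite eqn_leq (word_mon Hmon hpt) leqNgt.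
  have e2 : rk r = rk q by apply/eqP; rewrite eqn_leq (word_mon Hmon (Hpos k)) leqNgt.
  by move: ntq; rewrite (word_uniq Hmon Huniq hpt (Hpos k) e1 e2) eqxx.
rewrite L0 add0r Sq in LS; rewrite LS in hk2.
have : (1:R)/2 < 1 by clear -d0; lra.
by move/(lt_trans hk2); rewrite ltxx.
Qed.
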